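(* Let $G=(Q,A,\delta)$ be an MDP, $q\in Q$, reals $a<0<b$ and $a\le\eta\le0$, and let $v$ be an $[a,b]$-valuation that is $\eta$-bounded with respect to some $\mathrm{NZ}\subseteq Q\times A$. For $n\in\mathbb N$ and $M\ge0$ define $f^{n,M}_v$ on infinite runs by $f^{n,M}_v(\rho)=s^n_v(\rho)$ if $c^n_v(\rho)=n$ and $f^{n,M}_v(\rho)=-M$ otherwise. Then for all $s>0$, $n\in\mathbb N$, $M\ge0$ and every strategy $\sigma$, $$\mathbb E^\sigma_q\big[G,\exp(s(f^{n,M}_v-n\eta))\big]\le\exp\Big(n\frac{s^2(b-a)^2}{8}\Big)+n\exp\Big(s(-M+n\max(|a|,|b|))+n\frac{s^2(b-a)^2}{8}\Big).$$
   Context: An MDP $G=(Q,A,\delta)$ has finite non-empty $Q,A$ and $\delta:Q\times A\to\mathcal D(Q)$; strategies are maps $\sigma:Q\cdot(A\cdot Q)^*\to\mathcal D(A)$, and $\mathbb P^\sigma_q[G,\cdot]$ (with expectation $\mathbb E^\sigma_q[G,\cdot]$) is the induced probability measure on infinite runs $(Q\cdot A)^\omega$ from $q$. An $[a,b]$-valuation is a function $v:Q\cdot(A\cdot Q)^*\to[a,b]$. It is $\eta$-bounded w.r.t. $\mathrm{NZ}\subseteq Q\times A$ if for every finite run $\rho$ with last state $\mathrm{last}(\rho)$ and every action $\alpha$: if $(\mathrm{last}(\rho),\alpha)\notin\mathrm{NZ}$ then $v(\rho\cdot(\alpha,q'))=0$ for all $q'\in Q$; if $(\mathrm{last}(\rho),\alpha)\in\mathrm{NZ}$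 then $\sum_{q'}\delta(\mathrm{last}(\rho),\alpha)(q')\,v(\rho\cdot(\alpha,q'))\le\eta$. For an infinite run $\rho=(q_0,a_0)(q_1,a_1)\cdots$, let $\mathrm{IndNZ}(\rho)=\{i:(q_i,a_i)\in\mathrm{NZ}\}$ and $\mathrm{IndNZ}^n(\rho)$ its $\min(n,|\mathrm{IndNZ}(\rho)|)$ smallest elements; $s^n_v(\rho):=\sum_{i\in\mathrm{IndNZ}^n(\rho)}v(q_0(a_0,q_1)\cdots(a_i,q_{i+1}))$ and $c^n_v(\rho):=|\mathrm{IndNZ}^n(\rho)|$. *)

(* Defs.v *)
From HB Require Import structures.
From mathcomp Require Import all_boot all_order all_algebra.
From mathcomp Require Import all_classical all_reals all_analysis.
Set Implicit Arguments. Unset Strict Implicit. Unset Printing Implicit Defensive.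
Import Order.TTheory GRing.Theory Num.Theory.
Local Open Scope classical_set_scope.
Local Open Scope ring_scope.

Section MDP.
Variables (R : realType) (Q A : finType).

(* A finite run q0 (a0,q1) ... (a_{k-1},q_k) is a pair (q0, [:: (a0,q1); ...]). *)
Definition finrun := (Q * seq (A * Q))%type.

Definition last_state (h : finrun) : Q := last h.1 [seq p.2 | p <- h.2].

Definition ext (h : finrun) (al : A) (q' : Q) : finrun := (h.1, rcons h.2 (al, q')).

Definition run := nat -> (Q * A)%type.

Definition prefix (r : run) (k : nat) : finrun :=
  ((r 0%N).1, [seq ((r j).2, (r j.+1).1) | j <- iota 0 k]).

Definition is_dist (T : finType) (p : T -> R) : Prop :=
  (forall t, 0 <= p t) /\ \sum_(t : T) p t = 1.

Definition is_mdp (delta : Q -> A -> Q -> R) : Prop :=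
  forall q al, is_dist (delta q al).

Definition is_strategy (sigma : finrun -> A -> R) : Prop :=
  forall h, is_dist (sigma h).

Definition is_valuation (a b : R) (v : finrun -> R) : Prop :=
  forall h, a <= v h <= b.

Definition eta_bounded (delta : Q -> A -> Q -> R) (NZ : pred (Q * A))
    (eta : R) (v : finrun -> R) : Prop :=
  forall (h : finrun) (al : A),
    (~~ NZ (last_state h, al) -> forall q', v (ext h al q') = 0) /\
    (NZ (last_state h, al) ->
       \sum_(q' : Q) delta (last_state h) al q' * v (ext h al q') <= eta).

Definition nzcount (NZ : pred (Q * A)) (r : run) (N : nat) : nat :=
  count (fun i => NZ (r i)) (iota 0 N).

(* IndNZ^n(r): the min(n, |IndNZ(r)|) smallest elements of IndNZ(r), i.e. the
   indices i in IndNZ(r) with fewer than n elements of IndNZ(r) below i *)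
Definition IndNZn (NZ : pred (Q * A)) (n : nat) (r : run) : set nat :=
  [set i | NZ (r i) /\ (nzcount NZ r i < n)%N].

Definition s_n (v : finrun -> R) (NZ : pred (Q * A)) (n : nat) (r : run) : R :=
  \sum_(i \in IndNZn NZ n r) v (prefix r i.+1).

Definition c_n (NZ : pred (Q * A)) (n : nat) (r : run) : nat :=
  \big[addn/0%N]_(i \in IndNZn NZ n r) 1%N.

Definition f_nM (v : finrun -> R) (NZ : pred (Q * A)) (n : nat) (M : R)
    (r : run) : R :=
  if c_n NZ n r == n then s_n v NZ n r else - M.

Definition cyl_prob (delta : Q -> A -> Q -> R) (sigma : finrun -> A -> R)
    (q : Q) (w : run) (k : nat) : R :=
  (if (w 0%N).1 == q then 1 else 0) *
  (\prod_(i < k.+1) sigma (prefix w i) (w i).2) *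
  (\prod_(i < k) delta (w i).1 (w i).2 (w i.+1).1).

End MDP.

(* The run process X : T -> run on a probability space (T, P) has law
   P^sigma_q[G, .]: coordinates are measurable and every cylinder
   has the probability prescribed by delta and sigma.  Since the cylinders
   generate the product sigma-algebra on runs and form a pi-system, this
   determines the law of X uniquely. *)
Definition is_run_law (R : realType) (Q A : finType) (d : measure_display)
    (T : measurableType d) (P : probability T R) (X : T -> run Q A)
    (delta : Q -> A -> Q -> R) (sigma : finrun Q A -> A -> R) (q : Q) : Prop :=
  (forall (i : nat) (x : Q * A), measurable [set t | X t i = x]) /\
  (forall (k : nat) (w : run Q A),
     P [set t | forall i, (i <= k)%N -> X t i = w i] =
     (cyl_prob delta sigma q w k)%:E).

(* Main.v *)
Require Import Defs.
From HB Require Import structures.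
From mathcomp Require Import all_boot all_order all_algebra.
From mathcomp Require Import all_classical all_reals all_analysis.
From mathcomp Require Import ring lra zify.
From mathcomp Require Import measurable_realfun.
Import Order.TTheory GRing.Theory Num.Theory.
Import numFieldNormedType.Exports.
Local Open Scope classical_set_scope.
Local Open Scope ring_scope.
Set Implicit Arguments. Unset Strict Implicit. Unset Printing Implicit Defensive.

Section Comb.
Variables (Q A : finType).
Local Notation T := (Q * A)%type.
Local Notation run := (run Q A).

Definition upd (w : run) (j : nat) (x : T) : run :=
  fun i => if i == j then x else w i.

Fixpoint Wd (K : nat) : seq run :=
  match K with
  | 0 => [seq (fun _ => x) | x <- index_enum T]
  | K'.+1 => [seq upd w K'.+1 x | w <- Wd K', x <- index_enum T]
  end.

Fixpoint agree (K : nat) (r w : run) : bool :=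
  match K with
  | 0 => r 0%N == w 0%N
  | K'.+1 => agree K' r w && (r K'.+1 == w K'.+1)
  end.

Lemma agreeP K r w : reflect (forall i, (i <= K)%N -> r i = w i) (agree K r w).
Proof.
elim: K => [|K IH] /=.
  apply: (iffP eqP) => [h i|]; last by apply.
  by rewrite leqn0 => /eqP ->.
apply: (iffP andP) => [[/IH h /eqP e] i|h].
  by rewrite leq_eqVlt => /orP[/eqP ->//|]; rewrite ltnS; apply: h.
split; last by apply/eqP/h.
by apply/IH => i iK; apply: h; rewrite (leq_trans iK).
Qed.

Definition dep {R : Type} K (F : run -> R) :=
  forall r r', (forall i, (i <= K)%N -> r i = r' i) -> F r = F r'.

Lemma upd_agree K w x i : (i <= K)%N -> upd w K.+1 x i = w i.
Proof. by rewrite /upd => iK; case: eqP => // e; move: iK; rewrite e ltnn. Qed.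

Variable R : realType.

Lemma sum_pred1_T (y : T) : \sum_(x : T) ((y == x)%:R : R) = 1.
Proof.
rewrite (bigD1 y) //= eqxx big1 ?addr0 // => x /negbTE.
by rewrite eq_sym => ->.
Qed.

Lemma sum_agree K r : \sum_(w <- Wd K) ((agree K r w)%:R : R) = 1.
Proof.
elim: K => [|K IH] /=.
  by rewrite big_map; exact: sum_pred1_T.
rewrite big_allpairs_dep /= -[RHS]IH; apply: eq_bigr => w _.
have E x : agree K r (upd w K.+1 x) = agree K r w.
  by apply/agreeP/agreeP => h i iK; rewrite ?upd_agree // in h *; rewrite h // upd_agree.
under eq_bigr => x _ do rewrite E /upd eqxx.
case: (agree K r w) => /=; first exact: sum_pred1_T.
by rewrite big1.
Qed.

Lemma decomp K (F : run -> R) : dep K F ->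
  forall r, F r = \sum_(w <- Wd K) (agree K r w)%:R * F w.
Proof.
move=> dF r.
transitivity (F r * \sum_(w <- Wd K) ((agree K r w)%:R : R)).
  by rewrite sum_agree mulr1.
rewrite mulr_sumr; apply: eq_bigr => w _.
case: agreeP => [h|_]; last by rewrite !mulr0 mul0r.
by rewrite (dF r w h) mulr1 mul1r.
Qed.

End Comb.

Section Comb2.
Variables (Q A : finType).
Local Notation run := (run Q A).

Lemma iotaSr k : iota 0 k.+1 = rcons (iota 0 k) k.
Proof. by rewrite -addn1 iotaD /= cats1. Qed.

Lemma prefixS (r : run) k : Defs.prefix r k.+1 = Defs.ext (Defs.prefix r k) (r k).2 (r k.+1).1.
Proof. by rewrite /Defs.prefix /Defs.ext iotaSr map_rcons. Qed.

Lemma last_state_ext (h : finrun Q A) al q' : last_state (Defs.ext h al q') = q'.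
Proof. by rewrite /last_state /Defs.ext /= map_rcons last_rcons. Qed.

Lemma last_state_prefix (r : run) k : last_state (Defs.prefix r k) = (r k).1.
Proof. by case: k => [//|k]; rewrite prefixS last_state_ext. Qed.

Lemma prefix_dep k (r r' : run) : (forall i, (i <= k)%N -> r i = r' i) ->
  Defs.prefix r k = Defs.prefix r' k.
Proof.
move=> h; rewrite /Defs.prefix (h 0%N) //; congr pair.
apply/eq_in_map => j; rewrite mem_iota add0n => /andP[_ jk].
by rewrite h ?(ltnW jk) // h.
Qed.

Variable NZ : pred (Q * A).

Lemma nzcountS (r : run) N : nzcount NZ r N.+1 = (nzcount NZ r N + NZ (r N))%N.
Proof. by rewrite /nzcount iotaSr -cats1 count_cat /= addn0. Qed.

Lemma nzcount_dep N (r r' : run) : (forall i, (i < N)%N -> r i = r' i) ->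
  nzcount NZ r N = nzcount NZ r' N.
Proof.
move=> h; apply: eq_in_count => i; rewrite mem_iota add0n => /andP[_ iN].
by rewrite /= h.
Qed.

Lemma nzcount_mono (r : run) N N' : (N <= N')%N -> (nzcount NZ r N <= nzcount NZ r N')%N.
Proof.
move=> /subnK <-; elim: (N' - N)%N => [|k IH]; first by rewrite add0n.
by rewrite addSn nzcountS (leq_trans IH) // leq_addr.
Qed.

Variable n : nat.
Definition good (r : run) i := NZ (r i) && (nzcount NZ r i < n)%N.

Definition CK K (r : run) : nat := \sum_(i < K) (good r i : nat).

Lemma CK_min K r : CK K r = minn (nzcount NZ r K) n.
Proof.
elim: K => [|K IH]; first by rewrite /CK big_ord0 /nzcount /= min0n.
rewrite /CK big_ord_recr /= -/(CK K r) IH nzcountS /good.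
case: (NZ (r K)) => /=; case: ltnP => h; lia.
Qed.

Lemma good_dep i (r r' : run) : (forall j, (j <= i)%N -> r j = r' j) ->
  good r i = good r' i.
Proof.
move=> h; rewrite /good (h i) // (@nzcount_dep i r r') // => j ji.
by apply: h; rewrite ltnW.
Qed.

Variable R : realType.
Variable v : finrun Q A -> R.

Definition SK K (r : run) : R :=
  \sum_(i < K) (if good r i then v (Defs.prefix r i.+1) else 0).

Lemma SK_dep K : dep K (SK K).
Proof.
move=> r r' h; rewrite /SK; apply: eq_bigr => i _.
have iK := ltn_ord i.
rewrite (@good_dep i r r'); last by move=> j ji; apply: h; rewrite (leq_trans ji) // ltnW.
by rewrite (@prefix_dep i.+1 r r') // => j ji; apply: h; rewrite (leq_trans ji).
Qed.

Lemma CK_dep K : dep K (CK K).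
Proof.
move=> r r' h; rewrite /CK; apply: eq_bigr => i _.
have iK := ltn_ord i.
by rewrite (@good_dep i r r') // => j ji; apply: h; rewrite (leq_trans ji) // ltnW.
Qed.

Lemma nzcount_depK K : dep K (fun r => nzcount NZ r K).
Proof. by move=> r r' h; apply: nzcount_dep => i iK; apply: h; rewrite ltnW. Qed.

End Comb2.

Section H.
Variable R : realType.

Lemma ge0_from_deriv (f df : R -> R) :
  (forall x : R, is_derive x (1:R) f (df x)) -> (forall x, 0 <= x -> 0 <= df x) ->
  f 0 = 0 -> forall x, 0 <= x -> 0 <= f x.
Proof.
move=> Hd Hpos f0 x x0.
have H1 : forall y, y \in `]0, x[ -> is_derive y (1:R) f (df y) by move=> y _; exact: Hd.
have [|c c0x E] := MVT_segment x0 H1.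
  apply/continuous_subspaceT=> r.
  apply/differentiable_continuous/derivable1_diffP.
  by have [] := Hd r.
move: E; rewrite f0 !subr0 => E; rewrite E; apply: mulr_ge0 => //; apply: Hpos.
by move: c0x; rewrite in_itv /= => /andP[].
Qed.

Variable p : R.
Hypothesis p0 : 0 <= p.
Hypothesis p1 : p <= 1.
Definition DD (u : R) := 1 - p + p * expR u.
Lemma DD_gt0 u : 0 < DD u.
Proof.
rewrite /DD; have := expR_gt0 u => e0.
have [->|pl1] := eqVneq p 1; first by rewrite subrr add0r mul1r.
have : p < 1 by rewrite lt_neqAle pl1 p1.
move=> h; have := mulr_ge0 p0 (ltW e0); lra.
Qed.

Lemma dDD (x : R) : is_derive x (1:R) DD (p * expR x).
Proof. rewrite /DD; apply: is_derive_eq; by rewrite add0r mul1r. Qed.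

Definition h1 (u : R) := u / 4 + (p - 1) + (1 - p) * (DD u)^-1.

Lemma h1_ge0 u : 0 <= u -> 0 <= h1 u.
Proof.
apply: (@ge0_from_deriv h1 (fun x => 4^-1 + (1 - p) * (- (DD x) ^- 2 * (p * expR x)))).
- move=> x; rewrite /h1.
  have dV := is_deriveV (lt0r_neq0 (DD_gt0 x)) (dDD x).
  apply: is_derive_eq.
  rewrite !scaler0 addr0 add0r /GRing.scale /= mulr1 !mulrA.
  done.
- move=> x _.
  have D0 := DD_gt0 x.
  have e0 := expR_gt0 x.
  have key : 4 * ((1 - p) * (p * expR x)) <= DD x ^+ 2.
    rewrite /DD; have := sqr_ge0 (1 - p - p * expR x); nra.
  have -> : 4^-1 + (1 - p) * (- DD x ^- 2 * (p * expR x)) =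
     4^-1 - ((1 - p) * (p * expR x)) / DD x ^+ 2.
    by rewrite mulNr mulrN; congr (_ - _); rewrite mulrCA mulrC.
  rewrite subr_ge0 ler_pdivrMr ?exprn_gt0 //.
  lra.
- rewrite /h1 /DD expR0 mulr1 subrK invr1; lra.
Qed.

Definition h2 (u : R) := p * u + u ^+ 2 / 8 - ln (DD u).

Lemma h2_ge0 u : 0 <= u -> 0 <= h2 u.
Proof.
apply: (@ge0_from_deriv h2 h1); last first.
- by rewrite /h2 /DD expR0 mulr1 subrK ln1; lra.
- by move=> x; apply: h1_ge0.
move=> x; rewrite /h2.
have dl : is_derive (DD x) (1:R) (@ln R) (DD x)^-1 := is_derive1_ln (DD_gt0 x).
have dc := is_derive1_comp dl (dDD x).
apply: is_derive_eq.
rewrite !scaler0 ?addr0 ?add0r /GRing.scale /= ?mulr1 /h1.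
have := DD_gt0 x; rewrite /DD => D0.
field; lra.
Qed.

Lemma hoeff_core (u : R) : 0 <= u ->
  (1 - p) * expR (- (p * u)) + p * expR ((1 - p) * u) <= expR (u ^+ 2 / 8).
Proof.
move=> u0; have := @h2_ge0 u u0; rewrite /h2 subr_ge0 => H.
have : DD u <= expR (p * u + u ^+ 2 / 8).
  by rewrite -ler_ln ?posrE ?expR_gt0 ?DD_gt0 // expRK.
rewrite expRD => H2.
have -> : (1 - p) * expR (- (p * u)) + p * expR ((1 - p) * u) =
  expR (- (p * u)) * DD u.
  rewrite (_ : (1 - p) * u = u + - (p * u)); last by ring.
  by rewrite expRD /DD; ring.
have e0 := expR_gt0 (- (p * u)).
rewrite -(ler_pM2l e0) in H2; apply: (le_trans H2).
by rewrite mulrA -expRD addNr expR0 mul1r.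
Qed.
End H.

Section H2.
Variable R : realType.
Lemma le_of_eq (x y : R) : x = y -> x <= y. Proof. by move=> ->. Qed.

Lemma chord (a b s eta y : R) : a < b -> 0 < s -> a <= y -> y <= b ->
  (b - a) * expR (s * (y - eta)) <=
  (b - y) * expR (s * (a - eta)) + (y - a) * expR (s * (b - eta)).
Proof.
move=> ab s0 ay yb.
set E := expR (s * (y - eta)).
have E0 : 0 < E by apply: expR_gt0.
have hA : E * (1 + s * (a - y)) <= expR (s * (a - eta)).
  rewrite (_ : s * (a - eta) = s * (y - eta) + s * (a - y)); last by ring.
  by rewrite expRD ler_pM2l // expR_ge1Dx.
have hB : E * (1 + s * (b - y)) <= expR (s * (b - eta)).
  rewrite (_ : s * (b - eta) = s * (y - eta) + s * (b - y)); last by ring.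
  by rewrite expRD ler_pM2l // expR_ge1Dx.
have hA' := ler_wpM2l (_ : 0 <= b - y) hA.
have hB' := ler_wpM2l (_ : 0 <= y - a) hB.
have : (b - a) * E = (b - y) * (E * (1 + s * (a - y))) + (y - a) * (E * (1 + s * (b - y))).
  by ring.
move=> ->; apply: lerD; [apply: hA'|apply: hB']; lra.
Qed.

Lemma hoeff_step (T : finType) (d y : T -> R) (a b eta s : R) :
  (forall t, 0 <= d t) -> \sum_t d t = 1 ->
  (forall t, a <= y t <= b) -> \sum_t d t * y t <= eta ->
  a <= eta -> eta <= b -> a < b -> 0 < s ->
  \sum_t d t * expR (s * (y t - eta) - s ^+ 2 * (b - a) ^+ 2 / 8) <= 1.
Proof.
move=> d0 d1 yab mu ae eb ab s0.
set A := expR (s * (a - eta)); set B := expR (s * (b - eta)).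
have ba0 : 0 < b - a by lra.
have AB : A <= B by rewrite ler_expR; apply: ler_wpM2l; lra.
set al := (b * A - a * B) / (b - a); set be := (B - A) / (b - a).
have be0 : 0 <= be by apply: divr_ge0; lra.
have ch t : expR (s * (y t - eta)) <= al + be * y t.
  have [h1 h2] := andP (yab t).
  have := @chord a b s eta (y t) ab s0 h1 h2.
  rewrite -/A -/B => H; rewrite -(ler_pM2l ba0); apply: (le_trans H).
  apply: le_of_eq; rewrite /al /be; field; lra.
set c := s ^+ 2 * (b - a) ^+ 2 / 8.
have -> : \sum_t d t * expR (s * (y t - eta) - c) =
    expR (- c) * \sum_t d t * expR (s * (y t - eta)).
  rewrite mulr_sumr; apply: eq_bigr => t _.
  by rewrite expRD; ring.
have S1 : \sum_t d t * expR (s * (y t - eta)) <= al + be * eta.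
  apply: le_trans (_ : \sum_t d t * (al + be * y t) <= _).
    by apply: ler_sum => t _; apply: ler_wpM2l.
  under eq_bigr => t _ do rewrite mulrDr (mulrC (d t)) (mulrCA (d t)).
  rewrite big_split /= -!mulr_sumr d1 mulr1 lerD2l.
  by apply: ler_wpM2l.
have core : al + be * eta <= expR c.
  set p := (eta - a) / (b - a).
  have p0 : 0 <= p by apply: divr_ge0; lra.
  have p1 : p <= 1 by rewrite ler_pdivrMr //; lra.
  have sb : 0 <= s * (b - a) by apply: mulr_ge0; lra.
  have := @hoeff_core R p p0 p1 (s * (b - a)) sb; rewrite -/c.
  have -> : (s * (b - a)) ^+ 2 / 8 = c by rewrite /c exprMn.
  have -> : - (p * (s * (b - a))) = s * (a - eta).
    rewrite /p; field; lra.
  have -> : (1 - p) * (s * (b - a)) = s * (b - eta).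
    rewrite /p; field; lra.
  rewrite -/A -/B => H; apply: (le_trans _ H).
  apply: le_of_eq; rewrite /al /be /p.
  field; lra.
have ec := expR_gt0 (- c).
apply: le_trans (ler_wpM2l (ltW ec) (le_trans S1 core)) _.
by rewrite -expRD addNr expR0.
Qed.
End H2.

Arguments Wd {Q A} K.

Section Exp.
Variables (R : realType) (Q A : finType).
Local Notation run := (run Q A).
Variables (delta : Q -> A -> Q -> R) (sigma : finrun Q A -> A -> R) (q : Q).
Hypothesis Hdelta : is_mdp delta.
Hypothesis Hsigma : is_strategy sigma.

Local Notation cyl w K := (cyl_prob delta sigma q w K).

Definition Ex K (F : run -> R) := \sum_(w <- Wd K) F w * cyl w K.

Lemma cyl_ge0 (w : run) K : 0 <= cyl w K.
Proof.
rewrite /cyl_prob; apply: mulr_ge0; first apply: mulr_ge0.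
- by case: ifP.
- by apply: prodr_ge0 => i _; case: (Hsigma (Defs.prefix w i)) => h _; apply: h.
- by apply: prodr_ge0 => i _; case: (Hdelta (w i).1 (w i).2) => h _; apply: h.
Qed.

Lemma cyl_upd K (w : run) (x : Q * A) : cyl (upd w K.+1 x) K.+1 =
  cyl w K * (sigma (Defs.prefix (upd w K.+1 x) K.+1) x.2 * delta (w K).1 (w K).2 x.1).
Proof.
rewrite /cyl_prob big_ord_recr [in X in _ * X]big_ord_recr /=.
have e0 : upd w K.+1 x 0%N = w 0%N by apply: upd_agree.
have eK : upd w K.+1 x K = w K by apply: upd_agree.
have eS : upd w K.+1 x K.+1 = x by rewrite /upd eqxx.
rewrite e0 eK eS.
have -> : \prod_(i < K.+1) sigma (Defs.prefix (upd w K.+1 x) (widen_ord (leqnSn K.+1) i))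
             (upd w K.+1 x (widen_ord (leqnSn K.+1) i)).2 =
          \prod_(i < K.+1) sigma (Defs.prefix w i) (w i).2.
  apply: eq_bigr => i _ /=; have iK : (i <= K)%N by rewrite -ltnS.
  rewrite upd_agree // (@prefix_dep _ _ i (upd w K.+1 x) w) // => j ji.
  by apply: upd_agree; rewrite (leq_trans ji).
have -> : \prod_(i < K) delta (upd w K.+1 x (widen_ord (leqnSn K) i)).1
            (upd w K.+1 x (widen_ord (leqnSn K) i)).2
            (upd w K.+1 x (widen_ord (leqnSn K) i).+1).1 =
          \prod_(i < K) delta (w i).1 (w i).2 (w i.+1).1.
  apply: eq_bigr => i _ /=; have iK := ltn_ord i.
  by rewrite !upd_agree // ltnW.
ring.
Qed.

Lemma Ex_S K F : Ex K.+1 F = \sum_(w <- Wd K) cyl w K *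
  \sum_(x : Q * A) F (upd w K.+1 x) *
     (sigma (Defs.prefix (upd w K.+1 x) K.+1) x.2 * delta (w K).1 (w K).2 x.1).
Proof.
rewrite /Ex /= big_allpairs_dep /=; apply: eq_bigr => w _.
rewrite mulr_sumr; apply: eq_bigr => x _.
by rewrite cyl_upd; ring.
Qed.

Lemma prefix_upd K (w : run) (x : Q * A) :
  Defs.prefix (upd w K.+1 x) K.+1 = Defs.ext (Defs.prefix w K) (w K).2 x.1.
Proof.
rewrite prefixS upd_agree // /upd eqxx.
by rewrite (@prefix_dep _ _ K (upd w K.+1 x) w) // => j jK; apply: upd_agree.
Qed.

Lemma inner_sum (h : finrun Q A) (qk : Q) (ak : A) (g : Q -> R) :
  \sum_(x : Q * A) g x.1 * (sigma (Defs.ext h ak x.1) x.2 * delta qk ak x.1) =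
  \sum_(q' : Q) g q' * delta qk ak q'.
Proof.
rewrite -(pair_bigA _ (fun q' a' => g q' * (sigma (Defs.ext h ak q') a' * delta qk ak q'))) /=.
apply: eq_bigr => q' _.
under eq_bigr => a' _ do rewrite mulrA (mulrC (g q')) -mulrA.
rewrite -mulr_suml; case: (Hsigma (Defs.ext h ak q')) => _ ->.
by rewrite mul1r mulrC.
Qed.

Lemma Ex1 K : Ex K (fun _ => 1) = 1.
Proof.
elim: K => [|K IH].
  rewrite /Ex /= big_map.
  under eq_bigr => x _ do rewrite mul1r /cyl_prob big_ord1 big_ord0 mulr1 /=.
  rewrite -(pair_bigA _ (fun q' a' => (if q' == q then 1 else 0) *
      sigma (Defs.prefix (fun _ => (q', a')) 0) a')) /=.
  rewrite (bigD1 q) //= [X in _ + X]big1 ?addr0.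
    rewrite eqxx; under eq_bigr => a' _ do rewrite mul1r.
    by case: (Hsigma (q, [::])) => _.
  move=> q' /negbTE ->; under eq_bigr => a' _ do rewrite mul0r.
  by rewrite big1.
rewrite Ex_S -[RHS]IH; apply: eq_bigr => w _.
rewrite mul1r -[RHS]mulr1; congr (_ * _).
under eq_bigr => x _ do rewrite prefix_upd.
rewrite (inner_sum _ _ _ (fun _ => 1)).
under eq_bigr => q' _ do rewrite mul1r.
by case: (Hdelta (w K).1 (w K).2).
Qed.


Variables (NZ : pred (Q * A)) (v : finrun Q A -> R) (a b eta s : R) (n : nat).
Hypotheses (a0 : a < 0) (b0 : 0 < b) (ae : a <= eta) (e0 : eta <= 0) (s0 : 0 < s).
Hypothesis Hv : is_valuation a b v.
Hypothesis Heta : eta_bounded delta NZ eta v.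

Let c := s ^+ 2 * (b - a) ^+ 2 / 8.

Definition Z K (r : run) :=
  expR (s * (SK NZ n v K r - eta * (CK NZ n K r)%:R) - c * (CK NZ n K r)%:R).

Lemma SK_upd K (w : run) x : SK NZ n v K.+1 (upd w K.+1 x) =
  SK NZ n v K w +
  (if good NZ n w K then v (Defs.ext (Defs.prefix w K) (w K).2 x.1) else 0).
Proof.
rewrite {1}/SK big_ord_recr /=; congr (_ + _).
  by apply: (SK_dep NZ n v (K:=K)) => i iK; apply: upd_agree.
rewrite prefix_upd (@good_dep _ _ NZ n K (upd w K.+1 x) w) // => j jK.
exact: upd_agree.
Qed.

Lemma CK_upd K (w : run) x : CK NZ n K.+1 (upd w K.+1 x) =
  (CK NZ n K w + good NZ n w K)%N.
Proof.
rewrite {1}/CK big_ord_recr /=; congr (_ + _)%N.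
  by apply: (CK_dep NZ n (K:=K)) => i iK; apply: upd_agree.
by rewrite (@good_dep _ _ NZ n K (upd w K.+1 x) w) // => j jK; exact: upd_agree.
Qed.

Lemma Z_upd K (w : run) x : Z K.+1 (upd w K.+1 x) = Z K w *
  (if good NZ n w K then
     expR (s * (v (Defs.ext (Defs.prefix w K) (w K).2 x.1) - eta) - c) else 1).
Proof.
rewrite /Z SK_upd CK_upd natrD.
case: (good NZ n w K) => /=.
  by rewrite -expRD; congr expR; ring.
by rewrite !addr0 mulr1.
Qed.

Lemma Z_step K : Ex K.+1 (Z K.+1) <= Ex K (Z K).
Proof.
rewrite Ex_S /Ex; apply: ler_sum => w _.
rewrite mulrC; apply: ler_wpM2r; first exact: cyl_ge0.
under eq_bigr => x _ do rewrite Z_upd prefix_upd -mulrA.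
rewrite -mulr_sumr.
set g := fun q' : Q => if good NZ n w K then
     expR (s * (v (Defs.ext (Defs.prefix w K) (w K).2 q') - eta) - c) else 1.
rewrite (inner_sum (Defs.prefix w K) (w K).1 (w K).2 g).
rewrite -[X in _ <= X]mulr1; apply: ler_wpM2l; first exact: expR_ge0.
rewrite /g; case hg: (good NZ n w K); last first.
  under eq_bigr => q' _ do rewrite mul1r.
  by case: (Hdelta (w K).1 (w K).2) => _ ->.
under eq_bigr => q' _ do rewrite mulrC.
have hNZ : NZ (last_state (Defs.prefix w K), (w K).2).
  by rewrite last_state_prefix -surjective_pairing; case/andP: hg.
have [_ hb] := Heta (Defs.prefix w K) (w K).2.
have := hb hNZ; rewrite last_state_prefix => hsum.
case: (Hdelta (w K).1 (w K).2) => d0 d1.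
apply: (hoeff_step d0 d1) => //.
  exact: le_trans e0 (ltW b0).
exact: lt_trans a0 b0.
Qed.

Lemma Z_super K : Ex K (Z K) <= 1.
Proof.
elim: K => [|K IH].
  rewrite -(Ex1 0) /Ex; apply/le_of_eq; apply: eq_bigr => w _.
  by rewrite /Z /SK /CK !big_ord0 /= !(mulr0, subr0, subrr) expR0.
exact: le_trans (Z_step K) IH.
Qed.

Variable M : R.
Hypothesis M0 : 0 <= M.

Definition GK K (r : run) :=
  expR (s * ((if (n <= nzcount NZ r K)%N then SK NZ n v K r else - M) - n%:R * eta)).

Let T2 := n%:R * expR (s * (- M + n%:R * Num.max `|a| `|b|) + n%:R * c).

Lemma c_ge0 : 0 <= c.
Proof. by rewrite /c; apply: mulr_ge0 => //; apply: mulr_ge0; apply: sqr_ge0. Qed.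

Lemma GK_bound K r : GK K r <= expR (n%:R * c) * Z K r + T2.
Proof.
have T20 : 0 <= T2 by apply: mulr_ge0; [exact: ler0n | exact: expR_ge0].
rewrite /GK; case: leqP => hn.
  apply: ler_wpDr => //.
  rewrite /Z CK_min (minn_idPr hn) -expRD; apply/le_of_eq; congr expR; ring.
apply: ler_wpDl; first by apply: mulr_ge0; exact: expR_ge0.
have n1 : (1 <= n)%N by case: n hn.
have n1R : 1 <= (n%:R : R) by rewrite ler1n.
apply: (@le_trans _ _ (expR (s * (- M + n%:R * Num.max `|a| `|b|) + n%:R * c))).
  rewrite ler_expR.
  have hm : - eta <= Num.max `|a| `|b|.
    rewrite le_max; apply/orP; left; rewrite ler0_norm ?lerN2 //; exact: ltW.
  have h1 : 0 <= n%:R * c by apply: mulr_ge0; [exact: ler0n| exact: c_ge0].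
  have h2 : n%:R * (- eta) <= n%:R * Num.max `|a| `|b| by apply: ler_wpM2l.
  have h3 := ler_wpM2l (ltW s0) (_ : - M - n%:R * eta <= - M + n%:R * Num.max `|a| `|b|).
  rewrite -[X in X <= _]addr0; apply: lerD => //.
  by apply: h3; rewrite lerD2l -mulrN.
rewrite /T2 -[X in X <= _]mul1r; apply: ler_wpM2r => //; exact: expR_ge0.
Qed.

Lemma GK_ex K : Ex K (GK K) <= expR (n%:R * c) + T2.
Proof.
apply: (@le_trans _ _ (Ex K (fun r => expR (n%:R * c) * Z K r + T2))).
  by apply: ler_sum => w _; apply: ler_wpM2r; [exact: cyl_ge0 | exact: GK_bound].
rewrite /Ex.
under eq_bigr => w _ do rewrite mulrDl -mulrA.
rewrite big_split /= -!mulr_sumr; apply: lerD.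
  rewrite -[X in _ <= X]mulr1; apply: ler_wpM2l; first exact: expR_ge0.
  exact: Z_super.
have := Ex1 K; rewrite /Ex => E1.
rewrite (_ : \sum_(i <- Wd K) cyl i K = 1); first by rewrite mulr1.
by rewrite -E1; apply: eq_bigr => w _; rewrite mul1r.
Qed.

End Exp.

Lemma fs_bounded (T : Type) (idx : T) (op : Monoid.com_law idx) (S : set nat)
    (F : nat -> T) K :
  (forall i, S i -> (i < K)%N) ->
  \big[op/idx]_(i \in S) F i = \big[op/idx]_(i < K) (if (i : nat) \in S then F i else idx).
Proof.
move=> hS.
rewrite fsbig_mkcond -(fsbig_widen `I_K setT) //; last first.
  move=> i [_ /= iK]; rewrite /patch; case: ifPn => // /set_mem /hS.
  by move=> h; exfalso; apply: iK.
by rewrite -fsbig_ord.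
Qed.

Section Pointwise.
Variables (R : realType) (Q A : finType).
Local Notation run := (run Q A).
Variables (NZ : pred (Q * A)) (v : finrun Q A -> R) (n : nat) (M : R).

Lemma in_IndNZn (r : run) i : (i \in IndNZn NZ n r) = good NZ n r i.
Proof.
rewrite /good; apply/idP/andP => [/set_mem [h1 h2] | [h1 h2]]; first by split.
by apply: mem_set; split.
Qed.

Lemma IndNZn_sums (r : run) K : (forall i, IndNZn NZ n r i -> (i < K)%N) ->
  c_n NZ n r = CK NZ n K r /\ s_n v NZ n r = SK NZ n v K r.
Proof.
move=> hK; split.
  rewrite /c_n (fs_bounded _ _ hK) /CK; apply: eq_bigr => i _.
  by rewrite in_IndNZn; case: (good NZ n r i).
rewrite /s_n (fs_bounded _ _ hK) /SK; apply: eq_bigr => i _.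
by rewrite in_IndNZn.
Qed.

Lemma eventually_f (r : run) : exists K0, forall K, (K0 <= K)%N ->
  (if (n <= nzcount NZ r K)%N then SK NZ n v K r else - M) = f_nM v NZ n M r.
Proof.
have [[K0 hK0]|nA] := pselect (exists K0, (n <= nzcount NZ r K0)%N).
  exists K0 => K KK0.
  have hn : (n <= nzcount NZ r K)%N by rewrite (leq_trans hK0) // nzcount_mono.
  rewrite hn.
  have hK : forall i, IndNZn NZ n r i -> (i < K)%N.
    move=> i [_ hi]; rewrite ltnNge; apply/negP => Ki.
    have := nzcount_mono NZ r Ki; lia.
  have [hc hs] := IndNZn_sums hK.
  by rewrite /f_nM hc CK_min (minn_idPr hn) eqxx hs.
have nA' : forall K, (nzcount NZ r K < n)%N.
  by move=> K; rewrite ltnNge; apply/negP => h; apply: nA; exists K.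
have [K1 hK1] : exists K1, forall i, (K1 <= i)%N -> ~~ NZ (r i).
  apply: contrapT => nB.
  have step : forall K1, exists i, (K1 <= i)%N && NZ (r i).
    move=> K1; apply: contrapT => h; apply: nB; exists K1 => i iK1.
    by apply/negP => hi; apply: h; exists i; rewrite iK1.
  have big : forall m, exists K, (m <= nzcount NZ r K)%N.
    elim=> [|m [K hK]]; first by exists 0%N.
    have [i /andP [Ki hi]] := step K.
    exists i.+1; rewrite nzcountS hi.
    have := nzcount_mono NZ r Ki; lia.
  have [K hK] := big n; have := nA' K; lia.
exists 0%N => K _.
have -> : (n <= nzcount NZ r K)%N = false by apply/negbTE; rewrite -ltnNge.
have hK : forall i, IndNZn NZ n r i -> (i < K1)%N.
  move=> i [hi _]; rewrite ltnNge; apply/negP => Ki.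
  by have := hK1 i Ki; rewrite hi.
have [hc _] := IndNZn_sums hK.
rewrite /f_nM hc CK_min.
have := nA' K1 => h.
by rewrite (minn_idPl (ltnW h)) (ltn_eqF h).
Qed.

End Pointwise.

Section Integ.
Variables (R : realType) (Q A : finType).
Local Notation run := (run Q A).
Variables (delta : Q -> A -> Q -> R) (sigma : finrun Q A -> A -> R) (q : Q).
Variables (d : measure_display) (T : measurableType d) (P : probability T R)
  (X : T -> run).
Hypothesis HX : is_run_law P X delta sigma q.

Definition Cyl K (w : run) : set T := [set t | forall i, (i <= K)%N -> X t i = w i].

Lemma Cyl_meas K w : measurable (Cyl K w).
Proof.
have [hm _] := HX.
elim: K => [|K IH].
  rewrite (_ : Cyl 0 w = [set t | X t 0%N = w 0%N]); first exact: hm.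
  apply/seteqP; split => t /=; first by apply.
  by move=> h i; rewrite leqn0 => /eqP ->.
rewrite (_ : Cyl K.+1 w = Cyl K w `&` [set t | X t K.+1 = w K.+1]).
  exact: measurableI.
apply/seteqP; split => t /=.
  by move=> h; split; [move=> i iK; apply: h; rewrite (leq_trans iK) | apply: h].
move=> [h1 h2] i; rewrite leq_eqVlt => /orP[/eqP -> //|]; rewrite ltnS; exact: h1.
Qed.

Lemma indic_agree K w t : \1_(Cyl K w) t = ((agree K (X t) w)%:R : R).
Proof.
rewrite indicE.
have -> : (t \in Cyl K w) = agree K (X t) w; last by [].
apply/idP/idP.
  by move/set_mem => h; apply/agreeP.
by move/agreeP => h; apply: mem_set.
Qed.

Lemma int_repr K (F : run -> R) : dep K F ->
  (fun t => (F (X t))%:E) =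
  (fun t => \sum_(w <- Wd K) ((F w)%:E * (\1_(Cyl K w) t)%:E))%E.
Proof.
move=> dF; apply: funext => t.
rewrite (decomp dF (X t)) -sumEFin; apply: eq_bigr => w _.
by rewrite indic_agree -EFinM mulrC.
Qed.

Lemma int_meas K (F : run -> R) : dep K F ->
  measurable_fun setT (fun t => (F (X t))%:E).
Proof.
move=> dF; rewrite (int_repr dF); apply: emeasurable_sum => w.
apply: emeasurable_funM; first exact: measurable_cst.
apply/measurable_realfun.measurable_EFinP.
exact: measurable_realfun.measurable_indic (Cyl_meas K w).
Qed.

Lemma int_eq K (F : run -> R) : dep K F -> (forall r, 0 <= F r) ->
  (\int[P]_t (F (X t))%:E = (Ex delta sigma q K F)%:E)%E.
Proof.
move=> dF F0; rewrite (int_repr dF) ge0_integral_sum //; last first.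
- move=> w t _; apply: mule_ge0; rewrite lee_fin //; exact: indicE_ge0.
- move=> w; apply: emeasurable_funM; first exact: measurable_cst.
  apply/measurable_realfun.measurable_EFinP.
  exact: measurable_realfun.measurable_indic (Cyl_meas K w).
rewrite /Ex -sumEFin; apply: eq_bigr => w _.
rewrite ge0_integralZl //; last 2 first.
- change (measurable_fun setT (EFin \o (\1_(Cyl K w) : T -> R))).
  apply/measurable_realfun.measurable_EFinP.
  exact: measurable_realfun.measurable_indic (Cyl_meas K w).
- by rewrite lee_fin.
rewrite integral_indic //; last exact: Cyl_meas.
rewrite setIT. have := HX.2 K w. rewrite -/(Cyl K w) => E.
transitivity ((F w)%:E * (cyl_prob delta sigma q w K)%:E)%E; last by rewrite EFinM.
by congr (_ * _)%E; exact: E.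
Qed.

End Integ.

Unset Implicit Arguments.

Theorem mainTheorem13 (R : realType) (Q A : finType)
    (delta : Q -> A -> Q -> R) (q : Q) (a b eta : R)
    (NZ : pred (Q * A)) (v : finrun Q A -> R) :
  is_mdp delta ->
  a < 0 -> 0 < b -> a <= eta -> eta <= 0 ->
  is_valuation a b v ->
  eta_bounded delta NZ eta v ->
  forall (s : R) (n : nat) (M : R) (sigma : finrun Q A -> A -> R),
  0 < s -> 0 <= M -> is_strategy sigma ->
  forall (d : measure_display) (T : measurableType d) (P : probability T R)
         (X : T -> run Q A),
  is_run_law P X delta sigma q ->
  (\int[P]_t (expR (s * (f_nM v NZ n M (X t) - n%:R * eta)))%:E <=
   (expR (n%:R * (s ^+ 2 * (b - a) ^+ 2 / 8)) +
    n%:R * expR (s * (- M + n%:R * Num.max `|a| `|b|)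
                 + n%:R * (s ^+ 2 * (b - a) ^+ 2 / 8)))%:E)%E.
Proof.
move=> Hd a0 b0 ae e0 Hv Heta s n M sigma s0 M0 Hs d T P X HX.
have dG K : dep K (GK NZ v eta s n M K).
  move=> r r' h; rewrite /GK (nzcount_depK NZ h) (SK_dep NZ n v h).
  by [].
have G0 K r : 0 <= GK NZ v eta s n M K r by exact: expR_ge0.
have Hpt t : (expR (s * (f_nM v NZ n M (X t) - n%:R * eta)))%:E =
    limn_einf (fun K => (GK NZ v eta s n M K (X t))%:E).
  have [K0 hK0] := eventually_f NZ v n M (X t).
  apply/esym; apply: (cvg_limn_einf_sup _).1.
  apply: cvg_near_cst; exists K0 => // K /= hK.
  by rewrite /GK hK0.
under eq_integral => t _ do rewrite Hpt.
apply: le_trans (fatou P measurableT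
   (f := fun K t => (GK NZ v eta s n M K (X t))%:E) _ _) _.
- by move=> K; exact: int_meas HX K _ (dG K).
- by move=> K t _; rewrite lee_fin.
rewrite limn_einf_lim; apply: lime_le; first exact: is_cvg_einfs.
apply: nearW => K.
rewrite /einfs /=; apply: ge_ereal_inf.
exists (\int[P]_t (GK NZ v eta s n M K (X t))%:E)%E; first by exists K => //=.
rewrite (int_eq HX (dG K) (G0 K)) lee_fin.
exact: (GK_ex q Hd Hs n a0 b0 ae e0 s0 Hv Heta M K).
Qed.
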